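(* Let $A$ be a complex commutative completely regular semi-simple Banach algebra, $\widetilde{\sigma}:A\to A$ an algebra automorphism, and $\sigma:\Delta(A)\to\Delta(A)$ the homeomorphism (for the Gelfand topology) $\sigma(\mu)=\mu\circ\widetilde{\sigma}^{-1}$, with $\widehat{\sigma}(\widehat{a})=\widehat{a}\circ\sigma^{-1}$ the induced automorphism of $\widehat{A}$. Then the set of non-periodic points $\{\mu\in\Delta(A):\sigma^n(\mu)\neq\mu\text{ for all } n\neq 0\}$ is dense in $\Delta(A)$ if and only if $\widehat{A}$ is a maximal abelian subalgebra of $\widehat{A}\rtimes_{\widehat{\sigma}}\mathbb{Z}$. In particular, $A$ is maximal abelian in $A\rtimes_{\widetilde{\sigma}}\mathbb{Z}$ if and only if the non-periodic points of $(\Delta(A),\sigma)$ are dense in $\Delta(A)$.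
   Context: $\Delta(A)$ is the set of non-zero multiplicative linear functionals on $A$; the Gelfand transform of $a$ is $\widehat{a}(\mu)=\mu(a)$, $\widehat{A}$ is the set of Gelfand transforms, and the Gelfand topology is the weakest topology making all $\widehat{a}$ continuous. $A$ is semi-simple if the Gelfand transform is injective, and completely regular if for every Gelfand-closed $F\subseteq\Delta(A)$ and $\phi_0\in\Delta(A)\setminus F$ there is $a\in A$ with $\widehat{a}=0$ on $F$ and $\widehat{a}(\phi_0)\neq0$. For an algebra $B$ with automorphism $\Psi$, $B\rtimes_\Psi\mathbb{Z}$ is the set of finitely supported functions $\mathbb{Z}\to B$, written $\sum_n b_n\delta^n$, with pointwise linear operations and multiplication determined by $(b_n\delta^n)*(c_m\delta^m)=b_n\Psi^n(c_m)\delta^{n+m}$; $B$ is embedded as $\{b_0\delta^0\}$. *)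

(* Defs.v *)
From mathcomp Require Import all_boot all_algebra.
From mathcomp Require Import complex.
From mathcomp Require Import all_classical all_reals.
Import GRing.Theory Num.Theory.
Set Implicit Arguments. Unset Strict Implicit. Unset Printing Implicit Defensive.
Local Open Scope ring_scope.
Local Open Scope classical_set_scope.

Section Defs.
Variable R : realType.
Local Notation C := R[i].
(* The underlying complex vector space of the algebra; the (possibly
   non-unital) multiplication is [mul], the norm is [nrm]. *)
Variable A : lmodType C.
Variable mul : A -> A -> A.
Variable nrm : A -> R.

Definition comm_banach_algebra : Prop :=
  [/\ [/\ (forall a b c, mul a (mul b c) = mul (mul a b) c),
          (forall a b, mul a b = mul b a),
          (forall a b c, mul (a + b) c = mul a c + mul b c) &
          (forall (k : C) a b, mul (k *: a) b = k *: mul a b)],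
      [/\ (forall a, nrm a = 0 -> a = 0),
          (forall a b, nrm (a + b) <= nrm a + nrm b),
          (forall (k : C) a, real_complex R (nrm (k *: a)) = `|k| * real_complex R (nrm a)) &
          (forall a b, nrm (mul a b) <= nrm a * nrm b)] &
      (forall u : nat -> A,
        (forall e : R, 0 < e -> exists N, forall m n, (N <= m)%N -> (N <= n)%N ->
             nrm (u m - u n) < e) ->
        exists l, forall e : R, 0 < e -> exists N, forall n, (N <= n)%N ->
             nrm (u n - l) < e)].

Definition is_char (phi : A -> C) : Prop :=
  [/\ (forall a b, phi (a + b) = phi a + phi b),
      (forall (k : C) a, phi (k *: a) = k * phi a),
      (forall a b, phi (mul a b) = phi a * phi b) &
      exists a, phi a <> 0].

Definition Delta := {phi : A -> C | is_char phi}.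

Definition gelfand (a : A) : Delta -> C := fun mu => sval mu a.

(* Gelfand topology: the weakest topology making all gelfand a continuous,
   i.e. the topology generated by the basic sets
   { nu | |nu(a_i) - mu(a_i)| < e, i < k }. *)
Definition gopen (U : set Delta) : Prop :=
  forall mu, U mu -> exists (k : nat) (F : 'I_k -> A) (e : R), 0 < e /\
    forall nu : Delta, (forall i, `|sval nu (F i) - sval mu (F i)| < real_complex R e) -> U nu.

Definition gclosed (F : set Delta) : Prop := gopen (~` F).

Definition gdense (D : set Delta) : Prop :=
  forall U, gopen U -> U !=set0 -> (U `&` D) !=set0.

Definition semisimple : Prop := injective gelfand.

Definition completely_regular : Prop :=
  forall (F : set Delta) (phi0 : Delta), gclosed F -> ~ F phi0 ->
    exists a, (forall nu, F nu -> sval nu a = 0) /\ sval phi0 a <> 0.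

Definition algebra_automorphism (s s' : A -> A) : Prop :=
  [/\ (forall a b, s (a + b) = s a + s b),
      (forall (k : C) a, s (k *: a) = k *: s a),
      (forall a b, s (mul a b) = mul (s a) (s b)),
      cancel s s' & cancel s' s].

Definition autz (s s' : A -> A) (n : int) : A -> A :=
  match n with Posz k => iter k s | Negz k => iter k.+1 s' end.

(* mu |-> mu o t on Delta (identity if mu o t were not a character, which
   never happens for t an automorphism) *)
Definition compD (t : A -> A) (mu : Delta) : Delta :=
  match pselect (is_char (sval mu \o t)) with
  | left h => exist _ (sval mu \o t) h
  | right _ => mu
  end.

Definition sigma (s s' : A -> A) : Delta -> Delta := compD s'.
Definition sigma_inv (s s' : A -> A) : Delta -> Delta := compD s.
Definition sigmaz (s s' : A -> A) (n : int) : Delta -> Delta :=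
  match n with Posz k => iter k (sigma s s') | Negz k => iter k.+1 (sigma_inv s s') end.

Definition nonperiodic (s s' : A -> A) : set Delta :=
  [set mu | forall n : int, n != 0 -> sigmaz s s' n mu <> mu].

End Defs.

Section Crossed.
Variable R : realType.
Local Notation C := R[i].
Variable B : nmodType.
Variable mulB : B -> B -> B.
Variable scB : C -> B -> B.
Variable Psi : int -> B -> B.   (* Psi n = n-th power of the automorphism *)
Variable P : set B.             (* the algebra of coefficients, inside B *)

Definition cp_elt (x : int -> B) : Prop :=
  finite_set [set n | x n <> 0] /\ forall n, P (x n).

(* (b_n d^n)(c_m d^m) = b_n Psi^n(c_m) d^(n+m) *)
Definition cp_mul (x y : int -> B) : int -> B :=
  fun k => (\sum_(n \in [set: int]) mulB (x n) (Psi n (y (k - n))))%R.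
Definition cp_add (x y : int -> B) : int -> B := fun n => x n + y n.
Definition cp_scale (c : C) (x : int -> B) : int -> B := fun n => scB c (x n).

Definition cp_subalgebra (S : set (int -> B)) : Prop :=
  [/\ S `<=` cp_elt, S (fun _ => 0),
      (forall x y, S x -> S y -> S (cp_add x y)),
      (forall c x, S x -> S (cp_scale c x)) &
      (forall x y, S x -> S y -> S (cp_mul x y))].

Definition cp_abelian (S : set (int -> B)) : Prop :=
  forall x y, S x -> S y -> cp_mul x y = cp_mul y x.

Definition cp_base : set (int -> B) :=
  [set x | cp_elt x /\ forall n, n != 0 -> x n = 0].

Definition maximal_abelian : Prop :=
  [/\ cp_subalgebra cp_base, cp_abelian cp_base &
      forall S, cp_subalgebra S -> cp_abelian S -> cp_base `<=` S -> S = cp_base].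
End Crossed.

Definition hat_sigmaz (R : realType) (A : lmodType R[i]) (mul : A -> A -> A)
  (s s' : A -> A) (n : int) (f : Delta mul -> R[i]) : Delta mul -> R[i] :=
  f \o sigmaz s s' (- n).

Arguments compD [R A] mul t mu.
Arguments sigma [R A] mul s s' _.
Arguments sigma_inv [R A] mul s s' _.
Arguments sigmaz [R A] mul s s' n _.
Arguments nonperiodic [R A] mul s s' _.
Arguments hat_sigmaz [R A] mul s s' n f _.
Arguments gelfand [R A] mul a _.

(* Main.v *)
Require Import Defs.
From mathcomp Require Import all_boot all_algebra.
From mathcomp Require Import complex.
From mathcomp Require Import all_classical all_reals.
Import mathcomp.order.order.Order.TTheory GRing.Theory Num.Theory.
From mathcomp Require Import zify finmap.
Local Open Scope ring_scope.
Local Open Scope classical_set_scope.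
Local Open Scope complex_scope.
Notation cRe := complex.Re. Notation cIm := complex.Im.
From mathcomp Require Import lra.
From mathcomp Require Import ring.
Section Topo.
Variable R : realType.
Local Notation C := R[i].

Definition nC (z : C) : R := cRe `|z|.

Lemma nCE (z : C) : `|z| = real_complex R (nC z).
Proof. by rewrite /nC normc_def. Qed.

Lemma nC_ge0 z : 0 <= nC z.
Proof. by have := normr_ge0 z; rewrite nCE -[X in X <= _]/(real_complex R 0) lecR. Qed.

Lemma nC_lt z e : (`|z| < real_complex R e) = (nC z < e).
Proof. by rewrite nCE ltcR. Qed.

Lemma nC_le z e : (`|z| <= real_complex R e) = (nC z <= e).
Proof. by rewrite nCE lecR. Qed.

Lemma nCD z w : nC (z + w) <= nC z + nC w.
Proof. by rewrite -lecR rmorphD -!nCE ler_normD. Qed.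

Lemma nCM z w : nC (z * w) = nC z * nC w.
Proof. by apply: complexI; rewrite rmorphM -!nCE normrM. Qed.

Lemma nCN z : nC (- z) = nC z.
Proof. by apply: complexI; rewrite -!nCE normrN. Qed.

Lemma nCB z w : nC (z - w) = nC (w - z).
Proof. by rewrite -nCN opprB. Qed.

Lemma nC0 : nC 0 = 0.
Proof. by apply: complexI; rewrite -nCE normr0. Qed.

Lemma nC_eq0 z : nC z = 0 -> z = 0.
Proof. by move=> h; apply/eqP; rewrite -normr_eq0 nCE h. Qed.

Lemma nC_gt0 z : z != 0 -> 0 < nC z.
Proof. by move=> hz; have := normr_gt0 z; rewrite hz nCE -[X in X < _]/(real_complex R 0) ltcR. Qed.

Lemma nC_real (x : R) : nC (real_complex R x) = `|x|.
Proof. by rewrite /nC normc_def /= expr0n /= addr0 sqrtr_sqr. Qed.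

Lemma nCi : nC 'i = 1.
Proof. by rewrite /nC normc_def /= expr0n /= add0r expr1n sqrtr1. Qed.

Lemma Re_le z : `|cRe z| <= nC z.
Proof.
rewrite /nC normc_def /= -sqrtr_sqr ler_sqrt ?addr_ge0 ?sqr_ge0 //.
by rewrite lerDl sqr_ge0.
Qed.

Lemma Im_le z : `|cIm z| <= nC z.
Proof.
rewrite /nC normc_def /= -sqrtr_sqr ler_sqrt ?addr_ge0 ?sqr_ge0 //.
by rewrite lerDr sqr_ge0.
Qed.

Lemma nC_small (x : C) (K : R) : (forall e : R, 0 < e -> nC x <= e * K) -> x = 0.
Proof.
move=> h; apply: nC_eq0; apply/eqP; rewrite eq_le nC_ge0 andbT.
have K0 : 0 <= K by have := h 1 ltr01; rewrite mul1r; apply: le_trans; exact: nC_ge0.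
apply: contraT; rewrite -ltNge => hx.
have := h (nC x / (K + 1)) (divr_gt0 hx (ltr_wpDl K0 ltr01)).
rewrite mulrAC ler_pdivlMr ?(ltr_wpDl K0 ltr01) // => h2.
have : nC x * (K + 1) <= nC x * K by [].
rewrite mulrDr mulr1; lra.
Qed.

Variable A : lmodType C.
Variable mul : A -> A -> A.
Local Notation D := (Delta mul).

Lemma gopen_nz a : gopen [set mu : D | sval mu a != 0].
Proof.
move=> mu /= hmu; exists 1%N, (fun _ => a), (nC (sval mu a)); split.
  exact: nC_gt0.
move=> nu /(_ ord0); rewrite nC_lt => h; apply/negP => /eqP h0.
by move: h; rewrite h0 sub0r nCN ltxx.
Qed.
End Topo.
Arguments gopen_nz {R A mul} a.
Arguments nC {R} z.
Arguments nCE {R} z. Arguments nC_ge0 {R} z. Arguments nC_lt {R} z e. Arguments nC_le {R} z e.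
Arguments nCD {R} z w. Arguments nCM {R} z w. Arguments nCN {R} z. Arguments nCB {R} z w.
Arguments nC0 {R}. Arguments nC_eq0 {R} z. Arguments nC_gt0 {R} z. Arguments nC_real {R} x.
Arguments nCi {R}. Arguments Re_le {R} z. Arguments Im_le {R} z. Arguments nC_small {R} x K.

Section Balls.
Variable R : realType.
Local Notation C := R[i].
Variable A : lmodType C.
Variable mul : A -> A -> A.
Local Notation D := (Delta mul).

Definition sball (mu : D) (Fs : seq A) (e : R) : set D :=
  [set nu | forall f, f \in Fs -> nC (sval nu f - sval mu f) < e].
Definition scball (mu : D) (Fs : seq A) (e : R) : set D :=
  [set nu | forall f, f \in Fs -> nC (sval nu f - sval mu f) <= e].

Lemma gopenP (U : set D) : gopen U -> forall mu, U mu ->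
  exists Fs e, 0 < e /\ sball mu Fs e `<=` U.
Proof.
move=> hU mu Umu; have [k [F [e [e0 he]]]] := hU mu Umu.
exists [seq F i | i <- enum 'I_k], e; split => // nu hnu; apply: he => i.
by rewrite nC_lt; apply: hnu; apply: map_f; rewrite mem_enum.
Qed.

Lemma gopen_balls (S : set D) :
  (forall nu, S nu -> exists Fs e, 0 < e /\ sball nu Fs e `<=` S) -> gopen S.
Proof.
move=> h mu Smu; have [Fs [e [e0 he]]] := h mu Smu.
exists (size Fs), (fun i => nth 0 Fs i), e; split => // nu hnu; apply: he => f fF.
have := hnu (Ordinal (etrans (index_mem f Fs) fF) : 'I_(size Fs)) ; rewrite /= nth_index //.
by rewrite nC_lt.
Qed.

Lemma foldmax (l : seq R) m0 :
  (forall x, x \in l -> x <= foldr Num.max m0 l) /\ m0 <= foldr Num.max m0 l.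
Proof.
elim: l => [|a l [IH1 IH2]] /=; first by split.
split; last by rewrite le_max IH2 orbT.
move=> x; rewrite in_cons => /orP[/eqP ->|xl]; first by rewrite le_max lexx.
by rewrite le_max IH1 ?orbT.
Qed.

Lemma foldmax_lt (l : seq R) m0 e : m0 < e -> (forall x, x \in l -> x < e) ->
  foldr Num.max m0 l < e.
Proof.
elim: l => [|a l IH] //= m0e h.
by rewrite gt_max h ?mem_head // IH // => x xl; apply: h; rewrite in_cons xl orbT.
Qed.

Lemma sball_open mu Fs e : gopen (sball mu Fs e).
Proof.
apply: gopen_balls => nu hnu.
pose l := [seq nC (sval nu f - sval mu f) | f <- Fs].
pose M := foldr Num.max (e - 1) l.
have hM : M < e.
  apply: foldmax_lt; first lra.
  by move=> x /mapP [f fF ->]; apply: hnu.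
have hM2 : forall f, f \in Fs -> nC (sval nu f - sval mu f) <= M.
  by move=> f fF; apply: (proj1 (foldmax l (e - 1))); apply: map_f.
exists Fs, (e - M); split; first lra.
move=> rho hrho f fF.
have := nCD (sval rho f - sval nu f) (sval nu f - sval mu f).
rewrite addrA subrK.
have := hrho f fF; have := hM2 f fF; lra.
Qed.

Lemma gopenI (U V : set D) : gopen U -> gopen V -> gopen (U `&` V).
Proof.
move=> hU hV; apply: gopen_balls => nu [Unu Vnu].
have [F1 [e1 [e10 h1]]] := gopenP _ hU _ Unu.
have [F2 [e2 [e20 h2]]] := gopenP _ hV _ Vnu.
exists (F1 ++ F2), (Num.min e1 e2); split; first by rewrite lt_min e10 e20.
move=> rho hrho; split.
  apply: h1 => f fF; have := hrho f; rewrite mem_cat fF => /(_ isT).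
  by rewrite lt_min => /andP[].
apply: h2 => f fF; have := hrho f; rewrite mem_cat fF orbT => /(_ isT).
by rewrite lt_min => /andP[].
Qed.

Lemma sball_sub_scball mu Fs e : sball mu Fs e `<=` scball mu Fs e.
Proof. by move=> nu h f fF; apply: ltW; apply: h. Qed.

Lemma scball_sub_sball mu Fs e e' : e < e' -> scball mu Fs e `<=` sball mu Fs e'.
Proof. by move=> ee nu h f fF; apply: le_lt_trans ee; apply: h. Qed.

Lemma sball_center mu Fs e : 0 < e -> sball mu Fs e mu.
Proof. by move=> e0 f _; rewrite subrr nC0. Qed.

End Balls.
Arguments sball {R A mul} mu Fs e.
Arguments scball {R A mul} mu Fs e.
Arguments gopenP {R A mul U} hU mu.
Arguments gopen_balls {R A mul S}.
Arguments sball_open {R A mul} mu Fs e.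
Arguments gopenI {R A mul U V}.
Arguments sball_sub_scball {R A mul mu Fs e}.
Arguments scball_sub_sball {R A mul mu Fs e e'}.
Arguments sball_center {R A mul mu Fs e}.
Section Chars.
Variable R : realType.
Local Notation C := R[i].
Variable A : lmodType C.
Variable mul : A -> A -> A.
Local Notation D := (Delta mul).

Lemma chD (mu : D) a b : sval mu (a + b) = sval mu a + sval mu b.
Proof. by case: (proj2_sig mu). Qed.
Lemma chZ (mu : D) k a : sval mu (k *: a) = k * sval mu a.
Proof. by case: (proj2_sig mu). Qed.
Lemma chM (mu : D) a b : sval mu (mul a b) = sval mu a * sval mu b.
Proof. by case: (proj2_sig mu). Qed.
Lemma ch0 (mu : D) : sval mu 0 = 0.
Proof. have := chD mu 0 0; rewrite addr0 => h; by apply: (addrI (sval mu 0)); rewrite addr0 -h. Qed.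
Lemma chN (mu : D) a : sval mu (- a) = - sval mu a.
Proof. by apply/eqP; rewrite -addr_eq0 -chD addNr ch0. Qed.
Lemma chB (mu : D) a b : sval mu (a - b) = sval mu a - sval mu b.
Proof. by rewrite chD chN. Qed.
Lemma ch_nz (mu : D) : exists a, sval mu a != 0.
Proof. by case: (proj2_sig mu) => _ _ _ [a ha]; exists a; apply/eqP. Qed.
End Chars.
Arguments chD {R A mul} mu a b. Arguments chZ {R A mul} mu k a.
Arguments chM {R A mul} mu a b. Arguments ch0 {R A mul} mu.
Arguments chN {R A mul} mu a. Arguments chB {R A mul} mu a b.
Arguments ch_nz {R A mul} mu.
Section Bound.
Variable R : realType.
Local Notation C := R[i].
Variable A : lmodType C.
Variable mul : A -> A -> A.
Variable nrm : A -> R.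
Hypothesis HA : comm_banach_algebra mul nrm.
Local Notation D := (Delta mul).

Lemma mulA a b c : mul a (mul b c) = mul (mul a b) c.
Proof. by case: HA => [[h1 h2 h3 h4] _ _]; auto. Qed.
Lemma mulC a b : mul a b = mul b a.
Proof. by case: HA => [[h1 h2 h3 h4] _ _]; auto. Qed.
Lemma mulDl a b c : mul (a + b) c = mul a c + mul b c.
Proof. by case: HA => [[h1 h2 h3 h4] _ _]; auto. Qed.
Lemma mulZl k a b : mul (k *: a) b = k *: mul a b.
Proof. by case: HA => [[h1 h2 h3 h4] _ _]; auto. Qed.
Lemma mulDr a b c : mul a (b + c) = mul a b + mul a c.
Proof. by rewrite mulC mulDl !(mulC a). Qed.
Lemma mul0r' a : mul a 0 = 0.
Proof. have := mulDr a 0 0; rewrite addr0 => h; apply: (addrI (mul a 0)); by rewrite addr0 -h. Qed.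
Lemma mulNr' a b : mul a (- b) = - mul a b.
Proof. by apply/eqP; rewrite -addr_eq0 -mulDr addNr mul0r'. Qed.
Lemma mulBr a b c : mul a (b - c) = mul a b - mul a c.
Proof. by rewrite mulDr mulNr'. Qed.
Lemma mul_sumr a (r : seq nat) (P : pred nat) (F : nat -> A) :
  mul a (\sum_(i <- r | P i) F i) = \sum_(i <- r | P i) mul a (F i).
Proof.
elim: r => [|x r IH]; first by rewrite !big_nil mul0r'.
by rewrite !big_cons; case: (P x); rewrite ?mulDr IH.
Qed.

Lemma nrm_eq0 a : nrm a = 0 -> a = 0.
Proof. by case: HA => _ [h _ _ _] _; apply: h. Qed.
Lemma nrmD a b : nrm (a + b) <= nrm a + nrm b.
Proof. by case: HA => _ [_ h _ _] _; apply: h. Qed.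
Lemma nrmM a b : nrm (mul a b) <= nrm a * nrm b.
Proof. by case: HA => _ [_ _ _ h] _; apply: h. Qed.
Lemma nrmZ k a : nrm (k *: a) = nC k * nrm a.
Proof.
case: HA => _ [_ _ h _] _; apply: complexI; by rewrite h nCE -rmorphM.
Qed.
Lemma nrm0 : nrm 0 = 0.
Proof. by rewrite -(scale0r (0 : A)) nrmZ nC0 mul0r. Qed.
Lemma nrmN a : nrm (- a) = nrm a.
Proof.
rewrite -scaleN1r nrmZ nCN.
have -> : nC (1 : C) = 1 by rewrite -[1 : C]/(real_complex R 1) nC_real normr1.
by rewrite mul1r.
Qed.
Lemma nrmB a b : nrm (a - b) = nrm (b - a).
Proof. by rewrite -nrmN opprB. Qed.
Lemma nrm_ge0 a : 0 <= nrm a.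
Proof.
have := nrmD a (- a); rewrite subrr nrm0 nrmN; lra.
Qed.
Lemma nrm_sum (r : seq nat) (F : nat -> A) :
  nrm (\sum_(i <- r) F i) <= \sum_(i <- r) nrm (F i).
Proof.
elim: r => [|x r IH]; first by rewrite !big_nil nrm0.
rewrite !big_cons; apply: le_trans (nrmD _ _) _; lra.
Qed.

Lemma small_real (x K : R) : 0 <= x -> (forall e : R, 0 < e -> x <= e * K) -> x = 0.
Proof.
move=> x0 h; apply/eqP; rewrite eq_le x0 andbT.
have K0 : 0 <= K by have := h 1 ltr01; rewrite mul1r; apply: le_trans.
apply: contraT; rewrite -ltNge => hx.
have hK : 0 < K + 1 by lra.
have := h (x / (K + 1)) (divr_gt0 hx hK).
rewrite mulrAC ler_pdivlMr // mulrDr mulr1; lra.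
Qed.

Lemma bernoulli (h : R) (n : nat) : 0 <= h -> 1 + n%:R * h <= (1 + h) ^+ n.
Proof.
move=> h0; elim: n => [|n IH]; first by rewrite mul0r addr0 expr0.
rewrite exprS -natr1 mulrDl mul1r.
have : 0 <= n%:R * h * h by rewrite mulr_ge0 // mulr_ge0.
have : (1 + h) * (1 + n%:R * h) <= (1 + h) * (1 + h) ^+ n.
  by rewrite ler_wpM2l // addr_ge0.
lra.
Qed.

Lemma geo_small (q c : R) : 0 <= q -> q < 1 -> 0 < c -> exists N : nat, q ^+ N < c.
Proof.
move=> q0 q1 c0; have [->|qn0] := eqVneq q 0.
  by exists 1%N; rewrite expr1.
have qp : 0 < q by rewrite lt_def qn0 q0.
pose h := q^-1 - 1.
have hp : 0 < h by rewrite /h subr_gt0 invf_gt1.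
pose N := Num.Def.archi_bound ((c * h)^-1).
have hN : (c * h)^-1 < N%:R by apply: archi_boundP; rewrite invr_ge0 mulr_ge0 // ltW.
exists N.
have e1 : q * (1 + h) = 1 by rewrite /h addrC subrK mulfV.
have hb : 1 + N%:R * h <= (1 + h) ^+ N by apply: bernoulli; exact: ltW.
have : q ^+ N * (1 + N%:R * h) <= 1.
  have E : q ^+ N * (1 + h) ^+ N = 1 by rewrite -exprMn e1 expr1n.
  rewrite -[X in _ <= X]E.
  by apply: ler_wpM2l => //; exact: exprn_ge0.
have : 1 < c * (N%:R * h).
  have : (c * h) * (c * h)^-1 < (c * h) * N%:R by rewrite ltr_pM2l // mulr_gt0.
  by rewrite mulfV ?mulf_neq0 ?lt0r_neq0 // mulrAC -mulrA.
have : 0 <= q ^+ N by rewrite exprn_ge0.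
have : 0 <= N%:R * h by rewrite mulr_ge0 // ltW.
move: (q ^+ N) (N%:R * h) => x y h1 h2 h3 h4.
nra.
Qed.

Lemma char_bound (nu : D) a : nC (sval nu a) <= nrm a.
Proof.
apply: contraT; rewrite -ltNge => ht.
have na0 := nrm_ge0 a.
have l0 : sval nu a != 0.
  by apply/eqP => h; move: ht; rewrite h nC0; lra.
pose b := (sval nu a)^-1 *: a.
have nb1 : sval nu b = 1 by rewrite chZ mulVf.
pose q := nrm b.
have q0 : 0 <= q := nrm_ge0 b.
have nCV : nC ((sval nu a)^-1) = (nC (sval nu a))^-1.
  apply: (mulIf (lt0r_neq0 (nC_gt0 _ l0))); rewrite -nCM mulVf // mulVf ?lt0r_neq0 ?nC_gt0 //.
  by rewrite -[1 : C]/(real_complex R 1) nC_real normr1.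
have q1 : q < 1.
  rewrite /q /b nrmZ nCV mulrC ltr_pdivrMr ?nC_gt0 //; lra.
pose pw n := iter n (mul b) b.
have npw : forall n, nrm (pw n) <= q ^+ n.+1.
  elim => [|n IH]; first by rewrite expr1.
  rewrite /pw iterS -/(pw n) exprS; apply: le_trans (nrmM _ _) _.
  by apply: ler_wpM2l.
pose S N := \sum_(0 <= i < N) pw i.
have Srec : forall N, S N.+1 = b + mul b (S N).
  move=> N; rewrite /S big_nat_recl // mul_sumr; congr (_ + _).
have geo : forall m n, (n <= m)%N ->
    (1 - q) * \sum_(n <= i < m) q ^+ i.+1 = q ^+ n.+1 - q ^+ m.+1.
  elim => [|m IH] n hnm.
    by move: hnm; rewrite leqn0 => /eqP ->; rewrite big_geq // mulr0 subrr.
  case: (ltngtP n m.+1) hnm => // [hlt|->] _; last by rewrite big_geq // mulr0 subrr.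
  rewrite big_nat_recr // mulrDr IH // (exprS q m.+1).
  ring.
have Sdiff : forall m n, (n <= m)%N -> S m - S n = \sum_(n <= i < m) pw i.
  by move=> m n hnm; rewrite /S (@big_cat_nat _ _ _ n 0 m) //= addrC addrK.
have nS : forall m n, (n <= m)%N -> nrm (S m - S n) <= q ^+ n.+1 / (1 - q).
  move=> m n hnm; rewrite Sdiff //; apply: le_trans (nrm_sum _ _) _.
  apply: le_trans (ler_sum _ (fun i _ => npw i)) _.
  rewrite ler_pdivlMr ?subr_gt0 // mulrC geo //.
  have : 0 <= q ^+ m.+1 by rewrite exprn_ge0.
  lra.
have cauchy : forall e : R, 0 < e -> exists N, forall m n, (N <= m)%N -> (N <= n)%N ->
    nrm (S m - S n) < e.
  move=> e e0.
  have hq1 : 0 < 1 - q by rewrite subr_gt0.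
  have [N hN] := @geo_small q (e * (1 - q)) q0 q1 (mulr_gt0 e0 hq1).
  exists N => m n hm hn.
  have key : forall k, (N <= k)%N -> q ^+ k.+1 / (1 - q) < e.
    move=> k hk; rewrite ltr_pdivrMr ?subr_gt0 //.
    apply: le_lt_trans hN; apply: ler_wiXn2l => //; [exact: ltW | exact: leqW].
  case: (leqP n m) => hnm.
    exact: le_lt_trans (nS _ _ hnm) (key _ hn).
  rewrite nrmB; exact: le_lt_trans (nS _ _ (ltnW hnm)) (key _ hm).
have [c hc] : exists c, forall e : R, 0 < e -> exists N, forall n, (N <= n)%N -> nrm (S n - c) < e.
  by case: HA => _ _ cplt; apply: cplt.
have dz : c - (b + mul b c) = 0.
  apply: nrm_eq0; apply: (@small_real _ (1 + q)); first exact: nrm_ge0.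
  move=> e e0; have [N hN] := hc e e0.
  have E : c - (b + mul b c) = (c - S N.+1) + mul b (S N - c).
    by rewrite Srec mulBr !opprD !addrA subrK.
  rewrite E; apply: le_trans (nrmD _ _) _.
  have h1 := hN N.+1 (leqnSn N); rewrite nrmB in h1.
  have h2 := hN N (leqnn N).
  have h3 := nrmM b (S N - c).
  have h4 : q * nrm (S N - c) <= q * e by apply: ler_wpM2l => //; exact: ltW.
  rewrite -/q in h3; nra.
have := congr1 (sval nu) dz; rewrite ch0 chB chD chM nb1 mul1r opprD addrA addrC addKr => /eqP.
by rewrite oppr_eq0 oner_eq0.
Qed.

End Bound.
Arguments char_bound {R A mul nrm} HA nu a.

Section Limit.
Variable R : realType.
Local Notation C := R[i].
Variable A : lmodType C.
Variable mul : A -> A -> A.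
Variable nrm : A -> R.
Hypothesis HA : comm_banach_algebra mul nrm.
Local Notation D := (Delta mul).
Variable G : set_system D.
Hypothesis UG : UltraFilter G.

Let PG : ProperFilter G. Proof. by case: UG. Qed.
Let FG : Filter G. Proof. by case: PG. Qed.

Lemma GT : G setT. Proof. exact: filterT. Qed.
Lemma GI {S1 S2 : set D} : G S1 -> G S2 -> G (S1 `&` S2). Proof. exact: filterI. Qed.
Lemma GS {S1 S2 : set D} : S1 `<=` S2 -> G S1 -> G S2. Proof. exact: filterS. Qed.
Lemma Gex {S : set D} : G S -> exists x, S x.
Proof.
move=> h; apply: contrapT => /forallNP hn.
have : S = set0 by apply/seteqP; split => x // /hn.
by move=> E; rewrite E in h; exact: (filter_not_empty G h).
Qed.
Lemma Gult S : G S \/ G (~` S). Proof. exact: in_ultra_setVsetC. Qed.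

Lemma rlim (g : D -> R) (M : R) : (forall nu, `|g nu| <= M) ->
  exists L, forall e, 0 < e -> G [set nu | `|g nu - L| < e].
Proof.
move=> hM; pose T := [set t : R | G [set nu | t <= g nu]].
have hT : has_sup T.
  split.
    exists (- M); apply: GS GT => nu _ /=.
    by have := hM nu; rewrite ler_norml => /andP[].
  exists M => t /= /Gex [nu hnu]; apply: le_trans hnu _.
  by have := hM nu; rewrite ler_norml => /andP[].
exists (sup T) => e e0.
have [t Tt ht] := sup_adherent e0 hT.
have h1 : G [set nu | sup T - e < g nu].
  by apply: GS Tt => nu /= h; apply: lt_le_trans h.
have h2 : G [set nu | g nu < sup T + e].
  case: (Gult [set nu | g nu < sup T + e]) => // h.
  have : T (sup T + e).
    by apply: GS h => nu /= hn; rewrite leNgt; apply/negP.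
  move/(sup_upper_bound hT); lra.
apply: GS (GI h1 h2) => nu [/= a b]; rewrite ltr_norml; apply/andP; split; lra.
Qed.

Lemma ulim : exists phi : A -> C, forall a e, 0 < e ->
  G [set nu | nC (sval nu a - phi a) < e].
Proof.
have hre : forall a, exists L, forall e, 0 < e -> G [set nu | `|cRe (sval nu a) - L| < e].
  move=> a; apply: (@rlim _ (nrm a)) => nu.
  exact: le_trans (Re_le _) (char_bound HA nu a).
have him : forall a, exists L, forall e, 0 < e -> G [set nu | `|cIm (sval nu a) - L| < e].
  move=> a; apply: (@rlim _ (nrm a)) => nu.
  exact: le_trans (Im_le _) (char_bound HA nu a).
have [fr hfr] := choice hre.
have [fi hfi] := choice him.
exists (fun a => real_complex R (fr a) + 'i * real_complex R (fi a)) => a e e0.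
have e20 : 0 < e / 2 by rewrite divr_gt0.
apply: GS (GI (hfr a _ e20) (hfi a _ e20)) => nu [/= h1 h2].
set z := sval nu a.
have E : z - (real_complex R (fr a) + 'i * real_complex R (fi a)) =
   real_complex R (cRe z - fr a) + 'i * real_complex R (cIm z - fi a).
  case: z {h1 h2} => x y /=. apply/eqP. rewrite eq_complex /=; apply/andP; split; apply/eqP; ring.
rewrite E; apply: le_lt_trans (nCD _ _) _.
rewrite nCM nCi mul1r !nC_real; lra.
Qed.

Lemma small_le (x r : R) : (forall e, 0 < e -> x < r + e) -> x <= r.
Proof.
move=> h; rewrite leNgt; apply/negP => hx.
have := h ((x - r) / 2); rewrite divr_gt0 ?subr_gt0 // => /(_ isT); lra.
Qed.

Variable phi : A -> C.
Hypothesis Hphi : forall a e, 0 < e -> G [set nu | nC (sval nu a - phi a) < e].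

Lemma lim_closed mu Fs r : G (scball mu Fs r) ->
  forall f, f \in Fs -> nC (phi f - sval mu f) <= r.
Proof.
move=> hG f fF; apply: small_le => e e0.
have [nu [h1 h2]] := Gex (GI hG (Hphi f _ e0)).
have := nCD (phi f - sval nu f) (sval nu f - sval mu f).
rewrite addrA subrK (nCB (phi f) (sval nu f)).
have := h1 f fF; move: h2 => /= h2; lra.
Qed.

Lemma lim_char a0 (d : R) : 0 < d -> G [set nu | d <= nC (sval nu a0)] -> is_char mul phi.
Proof.
move=> d0 hd; split.
- move=> a b; apply/eqP; rewrite -subr_eq0; apply/eqP.
  apply: (nC_small _ 3) => e e0.
  have [nu [[h1 h2] h3]] := Gex (GI (GI (Hphi (a + b) _ e0) (Hphi a _ e0)) (Hphi b _ e0)).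
  move: h1 h2 h3 => /= h1 h2 h3.
  have E : phi (a + b) - (phi a + phi b) = - (sval nu (a + b) - phi (a + b)) +
      ((sval nu a - phi a) + (sval nu b - phi b)).
    by rewrite chD; ring.
  rewrite E; apply: le_trans (nCD _ _) _; rewrite nCN.
  have := nCD (sval nu a - phi a) (sval nu b - phi b); lra.
- move=> k a; apply/eqP; rewrite -subr_eq0; apply/eqP.
  apply: (nC_small _ (1 + nC k)) => e e0.
  have [nu [h1 h2]] := Gex (GI (Hphi (k *: a) _ e0) (Hphi a _ e0)).
  move: h1 h2 => /= h1 h2.
  have E : phi (k *: a) - k * phi a = - (sval nu (k *: a) - phi (k *: a)) +
      k * (sval nu a - phi a).
    by rewrite chZ; ring.
  rewrite E; apply: le_trans (nCD _ _) _; rewrite nCN nCM.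
  have : nC k * nC (sval nu a - phi a) <= nC k * e.
    by apply: ler_wpM2l; [exact: nC_ge0 | exact: ltW].
  lra.
- move=> a b; apply/eqP; rewrite -subr_eq0; apply/eqP.
  apply: (nC_small _ (1 + nrm b + nC (phi a))) => e e0.
  have [nu [[h1 h2] h3]] := Gex (GI (GI (Hphi (mul a b) _ e0) (Hphi a _ e0)) (Hphi b _ e0)).
  move: h1 h2 h3 => /= h1 h2 h3.
  have E : phi (mul a b) - phi a * phi b = - (sval nu (mul a b) - phi (mul a b)) +
      ((sval nu a - phi a) * sval nu b + phi a * (sval nu b - phi b)).
    by rewrite chM; ring.
  rewrite E; apply: le_trans (nCD _ _) _; rewrite nCN.
  apply: le_trans (lerD (lexx _) (nCD _ _)) _.
  rewrite !nCM.
  have hb := char_bound HA nu b.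
  have : nC (sval nu a - phi a) * nC (sval nu b) <= e * nrm b.
    by apply: ler_pM; rewrite ?nC_ge0 // ltW.
  have : nC (phi a) * nC (sval nu b - phi b) <= nC (phi a) * e.
    by apply: ler_wpM2l; [exact: nC_ge0 | exact: ltW].
  lra.
- have d20 : 0 < d / 2 by rewrite divr_gt0.
  have [nu [h1 h2]] := Gex (GI hd (Hphi a0 _ d20)).
  move: h1 h2 => /= h1 h2.
  exists a0 => h0; move: h2; rewrite h0 subr0; lra.
Qed.

End Limit.
Arguments ulim {R A mul nrm} HA {G} UG.
Arguments lim_char {R A mul nrm} HA {G} UG {phi} Hphi {a0 d}.
Arguments lim_closed {R A mul G} UG {phi} Hphi {mu Fs r}.
Section Basics.
Variable R : realType.
Local Notation C := R[i].
Variable A : lmodType C.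
Variable mul : A -> A -> A.
Variables s s' : A -> A.
Hypothesis Hs : algebra_automorphism mul s s'.

Lemma char_comp (t : A -> A) : (t = s \/ t = s') ->
  forall phi, is_char mul phi -> is_char mul (phi \o t).
Proof.
case: Hs => sD sZ sM ss' s's.
have s'D : forall a b, s' (a + b) = s' a + s' b.
  by move=> a b; apply: (can_inj ss'); rewrite sD !s's.
have s'Z : forall (k : C) a, s' (k *: a) = k *: s' a.
  by move=> k a; apply: (can_inj ss'); rewrite sZ !s's.
have s'M : forall a b, s' (mul a b) = mul (s' a) (s' b).
  by move=> a b; apply: (can_inj ss'); rewrite sM !s's.
move=> ht phi [pD pZ pM [a pa]].
case: ht => ->; split => /=.
- by move=> x y; rewrite /= sD pD.
- by move=> k x; rewrite sZ pZ.
- by move=> x y; rewrite sM pM.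
- by exists (s' a); rewrite s's.
- by move=> x y; rewrite s'D pD.
- by move=> k x; rewrite s'Z pZ.
- by move=> x y; rewrite s'M pM.
- by exists (s a); rewrite ss'.
Qed.

Lemma compD_val (t : A -> A) mu : (t = s \/ t = s') ->
  sval (compD mul t mu) = sval mu \o t.
Proof.
move=> ht; rewrite /compD; case: pselect => // h; exfalso; apply: h.
by apply: char_comp => //; exact: proj2_sig mu.
Qed.

Lemma Delta_eq (mu nu : Delta mul) : (forall a, sval mu a = sval nu a) -> mu = nu.
Proof.
case: mu => f hf; case: nu => g hg /= H.
have efg : f = g by apply: funext.
subst g; congr exist; exact: Prop_irrelevance.
Qed.

Lemma autzS n a : autz s s' (n + 1) a = s (autz s s' n a).
Proof.
case: Hs => _ _ _ ss' s's.
case: n => [k|k]; first by rewrite /= addn1.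
case: k => [|k].
  have -> : Negz 0 + 1 = 0 by rewrite NegzE; lia.
  by rewrite /= s's.
have -> : Negz k.+1 + 1 = Negz k by rewrite !NegzE; lia.
by rewrite /= s's.
Qed.

Lemma autzN1 n a : autz s s' (n - 1) a = s' (autz s s' n a).
Proof.
case: Hs => _ _ _ ss' s's.
by rewrite -{2}(subrK 1 n) autzS ss'.
Qed.

Lemma autzD m n a : autz s s' (m + n) a = autz s s' m (autz s s' n a).
Proof.
case: m => [k|k].
  elim: k => [|k IH]; first by rewrite add0r.
  have -> : Posz k.+1 + n = (Posz k + n) + 1 by lia.
  by rewrite autzS IH.
elim: k => [|k IH].
  have -> : Negz 0 + n = n - 1 by rewrite NegzE; lia.
  by rewrite autzN1.
have -> : Negz k.+1 + n = (Negz k + n) - 1 by rewrite !NegzE; lia.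
by rewrite autzN1 IH.
Qed.

Lemma autz0 a : autz s s' 0 a = a.
Proof. by []. Qed.

Lemma sigmaz_val n mu a : sval (sigmaz mul s s' n mu) a = sval mu (autz s s' (- n) a).
Proof.
case: n => [k|k].
  elim: k a => [|k IH] a //=.
  rewrite (compD_val _ _ (or_intror erefl)) /=.
  move: (IH (s' a)) => /= ->.
  rewrite -[s' a]/(autz s s' (-1) a) -autzD.
  by have -> : - Posz k + -1 = Negz k by rewrite NegzE; lia.
elim: k a => [|k IH] a /=.
  by rewrite (compD_val _ _ (or_introl erefl)).
rewrite (compD_val _ _ (or_introl erefl)) /=.
move: (IH (s a)) => /= ->.
by rewrite -iterSr.
Qed.

End Basics.
Arguments autzD {R A mul s s'} Hs m n a.
Arguments autzS {R A mul s s'} Hs n a.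
Arguments autzN1 {R A mul s s'} Hs n a.
Arguments sigmaz_val {R A mul s s'} Hs n mu a.
Arguments Delta_eq {R A mul} mu nu.
Arguments compD_val {R A mul s s'} Hs t mu.
Section BaireSec.
Variable R : realType.
Local Notation C := R[i].
Variable A : lmodType C.
Variable mul : A -> A -> A.
Variable nrm : A -> R.
Hypothesis HA : comm_banach_algebra mul nrm.
Variables s s' : A -> A.
Hypothesis Hs : algebra_automorphism mul s s'.
Local Notation D := (Delta mul).
Local Notation sz := (sigmaz mul s s').

Lemma nonfix n (mu : D) : sz n mu <> mu ->
  exists c, sval mu c != 0 /\ forall nu : D, sval nu c != 0 -> sz n nu <> nu.
Proof.
move=> h.
have [b hb] : exists b, sval mu (autz s s' (- n) b) <> sval mu b.
  apply: contrapT => /forallNP hn; apply: h; apply: Delta_eq => b.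
  by rewrite (sigmaz_val Hs); apply: contrapT; apply: hn.
exists (autz s s' (- n) b - b); split.
  by rewrite chB subr_eq0; apply/eqP.
move=> nu; rewrite chB subr_eq0 => /eqP hne hnu; apply: hne.
by rewrite -(sigmaz_val Hs) hnu.
Qed.

Lemma perN' n (mu : D) : sz n mu = mu -> sz (- n) mu = mu.
Proof.
move=> h; apply: Delta_eq => a; rewrite (sigmaz_val Hs) opprK.
have := congr1 (fun nu : D => sval nu (autz s s' n a)) h.
by rewrite /= (sigmaz_val Hs) -(autzD Hs) addNr => <-.
Qed.

Lemma baire U : gopen U -> U !=set0 ->
     ~ ((U `&` nonperiodic mul s s') !=set0) ->
     exists n : nat, (0 < n)%N /\ exists V, gopen V /\ V !=set0 /\
       forall mu, V mu -> sz (Posz n) mu = mu.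
Proof.
move=> hU [mu0 Umu0] hno; apply: contrapT => Hneg.
have H : forall n : nat, (0 < n)%N -> forall V : set D, gopen V -> V !=set0 ->
    exists mu, V mu /\ sz n mu <> mu.
  move=> n n0 V hV hne; apply: contrapT => hn; apply: Hneg.
  exists n; split => //; exists V; split => //; split => // mu Vmu.
  apply: contrapT => h; apply: hn; by exists mu.
have [a0 ha0] := ch_nz mu0.
pose d := nC (sval mu0 a0) / 2.
have d0 : 0 < d by rewrite divr_gt0 // nC_gt0.
pose O0 := U `&` sball mu0 [:: a0] d.
have hO0 : gopen O0 by apply: gopenI => //; exact: sball_open.
have K0 : forall nu, O0 nu -> d <= nC (sval nu a0).
  move=> nu [_ /(_ a0 (mem_head _ _)) h].
  have := nCD (sval nu a0) (sval mu0 a0 - sval nu a0); rewrite addrC subrK.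
  rewrite nCB; rewrite /d in h *; lra.
pose Inv (O : set D) := [/\ gopen O, O !=set0 & O `<=` O0].
have Inv0 : Inv O0.
  split => //; exists mu0; split => //; exact: sball_center.
pose Good k (O : set D) (p : set D * set D) :=
  [/\ Inv p.1, p.1 `<=` p.2, p.2 `<=` O, (forall nu, p.2 nu -> sz (Posz k.+1) nu <> nu)
   & exists mu Fs r, p.2 = scball mu Fs r].
have step : forall k O, Inv O -> exists p, Good k O p.
  move=> k O [hO hne hsub].
  have [mu [Omu hmu]] := H k.+1 isT O hO hne.
  have [c [hc hcnu]] := nonfix _ _ hmu.
  pose W := O `&` [set nu : D | sval nu c != 0].
  have hW : gopen W by apply: gopenI => //; exact: gopen_nz.
  have [Fs [e [e0 he]]] := gopenP hW mu (conj Omu hc).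
  have e20 : 0 < e / 2 by rewrite divr_gt0.
  have e2e : e / 2 < e by rewrite ltr_pdivrMr // ltr_pMr // ltr1n.
  have sW : scball mu Fs (e / 2) `<=` W.
    by move=> nu h; apply: he; apply: scball_sub_sball e2e _ h.
  exists (sball mu Fs (e / 2), scball mu Fs (e / 2)); split => /=.
  - split; first exact: sball_open.
      by exists mu; exact: sball_center.
    by move=> nu /sball_sub_scball /sW [/hsub].
  - exact: sball_sub_scball.
  - by move=> nu /sW [].
  - by move=> nu /sW [_ /hcnu].
  - by exists mu, Fs, (e / 2).
pose T := {O : set D | Inv O}.
have stepf : forall k (O : T), {p | Good k (sval O) p}.
  by move=> k O; apply: cid; apply: step; exact: (svalP O).
pose next k (O : T) : T := exist _ (sval (stepf k O)).1
  (let: And5 h _ _ _ _ := svalP (stepf k O) in h).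
pose seqO k := iteri k next (exist _ O0 Inv0).
pose Cl k := (sval (stepf k (seqO k))).2.
have G k : Good k (sval (seqO k)) (sval (stepf k (seqO k))) := svalP (stepf k (seqO k)).
have ClO k : Cl k `<=` sval (seqO k) by case: (G k).
have OCl k : sval (seqO k.+1) `<=` Cl k by case: (G k).
have OO0 k : sval (seqO k) `<=` O0 by case: (svalP (seqO k)).
have Ohne k : sval (seqO k) !=set0 by case: (svalP (seqO k)).
have Clne k : Cl k !=set0.
  by have [x hx] := Ohne k.+1; exists x; apply: OCl.
have Cldec : forall m n, (m <= n)%N -> Cl n `<=` Cl m.
  move=> m n; elim: n => [|n IH].
    by rewrite leqn0 => /eqP ->.
  rewrite leq_eqVlt => /orP[/eqP -> //| hmn] x hx.
  by apply: IH => //; apply: OCl; apply: ClO.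
have Clfix k nu : Cl k nu -> sz (Posz k.+1) nu <> nu by case: (G k) => _ _ _ h _; apply: h.
have Clform k : exists mu Fs r, Cl k = scball mu Fs r by case: (G k).
pose F : set_system D := [set S | exists k, Cl k `<=` S].
have FF : Filter F.
  split.
  - by exists 0%N.
  - move=> S1 S2 [k1 h1] [k2 h2]; exists (maxn k1 k2) => x hx; split.
      by apply: h1; apply: Cldec hx; exact: leq_maxl.
    by apply: h2; apply: Cldec hx; exact: leq_maxr.
  - by move=> S1 S2 h12 [k hk]; exists k => x /hk /h12.
have PF : ProperFilter F.
  apply: Build_ProperFilter_ex => // S [k hk].
  by have [x hx] := Clne k; exists x; apply: hk.
have [Gu [UG FG]] := ultraFilterLemma PF.
have [phi Hphi] := ulim HA UG.
have GK : Gu [set nu | d <= nC (sval nu a0)].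
  apply: FG; exists 0%N => nu hnu; apply: K0; apply: (OO0 0%N); exact: (ClO 0%N _ hnu).
have phic := lim_char HA UG Hphi d0 GK.
pose phiD : D := exist _ phi phic.
have inCl k : Cl k phiD.
  have [mu [Fs [r hr]]] := Clform k.
  rewrite hr => f fF /=.
  apply: (lim_closed UG Hphi (mu := mu) (Fs := Fs) (r := r)) => //.
  by rewrite -hr; apply: FG; exists k.
apply: hno; exists phiD; split.
  by have := OO0 0%N _ (ClO 0%N _ (inCl 0%N)); case.
move=> m m0; case: m m0 => [[|k]|k] m0 //.
  exact: Clfix (inCl k).
move=> h; apply: (Clfix k phiD (inCl k)).
by have := perN' _ _ h.
Qed.
End BaireSec.
Arguments baire {R A mul nrm} HA {s s'} Hs U.
Section Generic.
Variable R : realType.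
Local Notation C := R[i].
Variable A : lmodType C.
Variable mul : A -> A -> A.
Variables s s' : A -> A.
Hypothesis Hs : algebra_automorphism mul s s'.
Local Notation D := (Delta mul).
Local Notation sz := (sigmaz mul s s').

Variables (B : nmodType) (mulB : B -> B -> B) (scB : C -> B -> B)
  (Psi : int -> B -> B) (P : set B) (e : B -> D -> C).
Hypotheses (e0 : forall mu, e 0 mu = 0)
  (eD : forall a b mu, e (a + b) mu = e a mu + e b mu)
  (einj : forall a b, (forall mu, e a mu = e b mu) -> a = b)
  (eM : forall a b mu, e (mulB a b) mu = e a mu * e b mu)
  (eZ : forall c a mu, e (scB c a) mu = c * e a mu)
  (ePsi : forall n a mu, e (Psi n a) mu = e a (sz (- n) mu))
  (P0 : P 0) (PD : forall a b, P a -> P b -> P (a + b))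
  (PZ : forall c a, P a -> P (scB c a))
  (PM : forall a b, P a -> P b -> P (mulB a b))
  (PPsi : forall n a, P a -> P (Psi n a)).

Lemma fin_sub T (X Y : set T) : finite_set Y -> X `<=` Y -> finite_set X.
Proof. by move=> fY XY; exact: sub_finite_set XY fY. Qed.
Arguments fin_sub {T X Y}.

Lemma fsum_nz (F : int -> C) : \sum_(n \in [set: int]) F n != 0 -> exists n, F n != 0.
Proof.
move=> h; apply: contrapT => /forallNP hn; move/negP: h; apply.
by apply/eqP; apply: fsbig1 => n _; move/negP: (hn n); rewrite negbK => /eqP.
Qed.

Lemma mulB0l b : mulB 0 b = 0.
Proof. by apply: einj => mu; rewrite eM !e0 mul0r. Qed.

Lemma supp_fin (x : int -> B) : cp_elt P x -> forall n : int, n \notin fset_set [set n | x n <> 0] -> x n = 0.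
Proof.
move=> [fx _] n; rewrite in_fset_set // notin_setE /=.
by apply: contra_notP.
Qed.

Lemma cpmulE x y k : cp_elt P x ->
  cp_mul mulB Psi x y k = \sum_(n <- fset_set [set n | x n <> 0]) mulB (x n) (Psi n (y (k - n))).
Proof.
move=> hx; rewrite /cp_mul (fsbigTE (fset_set [set n | x n <> 0])) //.
by move=> i /(@supp_fin _ hx) ->; rewrite mulB0l.
Qed.

Lemma e_sum (I : Type) (r : seq I) (F : I -> B) mu :
  e (\sum_(i <- r) F i) mu = \sum_(i <- r) e (F i) mu.
Proof.
elim: r => [|a r IH]; first by rewrite !big_nil e0.
by rewrite !big_cons eD IH.
Qed.

Lemma emul x y k mu : cp_elt P x ->
  e (cp_mul mulB Psi x y k) mu =
  \sum_(n \in [set: int]) (e (x n) mu * e (y (k - n)) (sz (- n) mu)).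
Proof.
move=> hx; rewrite cpmulE // e_sum.
rewrite (fsbigTE (fset_set [set n | x n <> 0])); last first.
  by move=> i /(@supp_fin _ hx) ->; rewrite e0 mul0r.
by apply: eq_bigr => n _; rewrite eM ePsi.
Qed.

Lemma cp_elt0 : cp_elt P (fun _ => 0).
Proof.
split => //; by apply: (fin_sub (finite_set0 int)) => n /=; apply.
Qed.

Lemma cp_eltD x y : cp_elt P x -> cp_elt P y -> cp_elt P (cp_add x y).
Proof.
move=> [fx Px] [fy Py]; split => [|n]; last exact: PD.
have fU : finite_set ([set n | x n <> 0] `|` [set n | y n <> 0]) by rewrite finite_setU.
apply: (fin_sub fU) => n /=.
rewrite /cp_add => h; apply: contrapT => /not_orP[/contrapT h1 /contrapT h2].
by apply: h; rewrite h1 h2 addr0.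
Qed.

Lemma scB0 c : scB c 0 = 0.
Proof. by apply: einj => mu; rewrite eZ !e0 mulr0. Qed.

Lemma cp_eltZ c x : cp_elt P x -> cp_elt P (cp_scale scB c x).
Proof.
move=> [fx Px]; split => [|n]; last exact: PZ.
apply: (fin_sub fx) => n /=; rewrite /cp_scale => h h1; apply: h.
by rewrite h1 scB0.
Qed.

Lemma cp_eltM x y : cp_elt P x -> cp_elt P y -> cp_elt P (cp_mul mulB Psi x y).
Proof.
move=> hx hy; split => [|k]; last first.
  rewrite cpmulE //; apply: big_ind => //; move=> n _.
  by apply: PM; [exact: hx.2 | apply: PPsi; exact: hy.2].
case: hx hy => [fx Px] [fy Py].
apply: (fin_sub (finite_image (fun p => p.1 + p.2) (finite_setX fx fy))).
move=> k /= hk.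
have [mu hmu] : exists mu, e (cp_mul mulB Psi x y k) mu != 0.
  apply: contrapT => /forallNP h; apply: hk; apply: einj => mu.
  by rewrite e0; move/negP: (h mu); rewrite negbK => /eqP.
move: hmu; rewrite (@emul x y k mu (conj fx Px)).
move=> /fsum_nz [n]; rewrite mulf_eq0 negb_or => /andP[h1 h2].
exists (n, k - n); last by rewrite /= addrC subrK.
split => /= h; [move: h1 | move: h2]; by rewrite h e0 eqxx.
Qed.

Lemma per_iff n mu : sz n mu = mu <-> forall a, sval mu (autz s s' (- n) a) = sval mu a.
Proof.
split.
  by move=> h a; rewrite -(sigmaz_val Hs) h.
by move=> h; apply: Delta_eq => a; rewrite (sigmaz_val Hs).
Qed.

Lemma perD n m mu : sz n mu = mu -> sz m mu = mu -> sz (n + m) mu = mu.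
Proof.
move=> /per_iff hn /per_iff hm; apply/per_iff => a.
by rewrite opprD (autzD Hs) hn hm.
Qed.

Lemma perN n mu : sz n mu = mu -> sz (- n) mu = mu.
Proof.
move=> /per_iff hn; apply/per_iff => a.
by rewrite opprK -(hn (autz s s' n a)) -(autzD Hs) addNr.
Qed.

Definition Sc : set (int -> B) :=
  [set x | cp_elt P x /\ forall n mu, e (x n) mu != 0 -> sz n mu = mu].

Lemma emul_Sc x y k mu : Sc x ->
  e (cp_mul mulB Psi x y k) mu =
  \sum_(n \in [set: int]) (e (x n) mu * e (y (k - n)) mu).
Proof.
move=> [hx px]; rewrite emul //; apply: eq_fsbigr => n _.
have [->|h] := eqVneq (e (x n) mu) 0; first by rewrite !mul0r.
by rewrite perN // px.
Qed.

Lemma Sc_sub : cp_subalgebra mulB scB Psi P Sc.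
Proof.
split.
- by move=> x [].
- split; first exact: cp_elt0.
  by move=> n mu; rewrite e0 eqxx.
- move=> x y [hx px] [hy py]; split; first exact: cp_eltD.
  move=> n mu; rewrite /cp_add eD => h.
  have [h0|h0] := eqVneq (e (x n) mu) 0; last exact: px.
  by apply: py; move: h; rewrite h0 add0r.
- move=> c x [hx px]; split; first exact: cp_eltZ.
  move=> n mu; rewrite /cp_scale eZ mulf_eq0 negb_or => /andP[_]; exact: px.
- move=> x y [hx px] [hy py]; split; first exact: cp_eltM.
  move=> k mu; rewrite emul // => /fsum_nz [n].
  rewrite mulf_eq0 negb_or => /andP[h1 h2].
  have hn := px _ _ h1.
  move: h2; rewrite (perN _ _ hn) => /py hkn.
  by have := perD _ _ _ hn hkn; rewrite addrC subrK.
Qed.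

Lemma Sc_ab : cp_abelian mulB Psi Sc.
Proof.
move=> x y hx hy; apply: funext => k; apply: einj => mu.
rewrite !emul_Sc //.
rewrite (reindex_fsbigT (fun n => k - n)) /=; last first.
  by exists (fun n => k - n) => n /=; rewrite opprB addrC subrK.
apply: eq_fsbigr => n _; rewrite mulrC; congr (_ * _).
by rewrite opprB addrC subrK.
Qed.

Lemma base_Sc : cp_base P `<=` Sc.
Proof.
move=> x [hx h0]; split => // n mu.
have [->|hn] := eqVneq n 0; first by [].
by rewrite h0 // e0 eqxx.
Qed.

Hypotheses (Pgel : forall b, P b -> exists a, forall mu, e b mu = sval mu a)
  (gelP : forall a, exists b, P b /\ forall mu, e b mu = sval mu a).

Lemma fsum_single (F : int -> C) m0 : (forall m, m != m0 -> F m = 0) ->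
  \sum_(n \in [set: int]) F n = F m0.
Proof.
move=> h; rewrite (fsbigTE [fset m0]%fset); last first.
  by move=> i; rewrite inE => /h.
by rewrite big_seq_fset1.
Qed.

Lemma base_sub : cp_subalgebra mulB scB Psi P (cp_base P).
Proof.
split.
- by move=> x [].
- by split; [exact: cp_elt0|].
- move=> x y [hx px] [hy py]; split; first exact: cp_eltD.
  by move=> n n0; rewrite /cp_add px // py // addr0.
- move=> c x [hx px]; split; first exact: cp_eltZ.
  by move=> n n0; rewrite /cp_scale px // scB0.
- move=> x y [hx px] [hy py]; split; first exact: cp_eltM.
  move=> k k0; apply: einj => mu; rewrite e0 emul //.
  apply: fsbig1 => n _.
  have [->|n0] := eqVneq n 0; last by rewrite px // e0 mul0r.
  by rewrite subr0 py // e0 mulr0.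
Qed.

Lemma base_ab : cp_abelian mulB Psi (cp_base P).
Proof. by move=> x y hx hy; apply: Sc_ab; apply: base_Sc. Qed.

Lemma dense_max : gdense (nonperiodic mul s s') -> maximal_abelian mulB scB Psi P.
Proof.
move=> hd; split; [exact: base_sub | exact: base_ab |].
move=> S hS hab hbS; apply/seteqP; split; last exact: hbS.
move=> x Sx; have hx : cp_elt P x by case: hS => + _ _ _ _; apply.
split => // n n0; apply: einj => mu; rewrite e0; apply: contrapT => hne.
have [a ha] := Pgel _ (hx.2 n).
have Wmu : [set nu : D | sval nu a != 0] mu by rewrite /= -ha; apply/eqP.
have [nu [/= Wnu NPnu]] := hd _ (gopen_nz a) (ex_intro _ mu Wmu).
apply: (NPnu (- n)); first by rewrite oppr_eq0.
apply: Delta_eq => b.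
have [c [Pc hc]] := gelP b.
pose z : int -> B := fun m => if m == 0 then c else 0.
have zb : cp_base P z.
  split; last by move=> m m0; rewrite /z (negbTE m0).
  split; last by move=> m; rewrite /z; case: ifP.
  apply: (fin_sub (finite_set1 (0 : int))) => m /=; rewrite /z.
  by case: eqP.
have := congr1 (fun f => e (f n) nu) (hab x z Sx (hbS z zb)).
rewrite /= (emul _ _ _ _ hx) (emul _ _ _ _ zb.1).
rewrite (fsum_single _ n); last first.
  move=> m mn; rewrite /z ifF ?e0 ?mulr0 //; apply/negbTE.
  by rewrite subr_eq0 eq_sym.
rewrite (fsum_single _ 0); last first.
  by move=> m m0; rewrite /z (negbTE m0) e0 mul0r.
rewrite /z subrr !eqxx subr0 !hc ha.
by rewrite [RHS]mulrC => /(mulfI Wnu).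
Qed.

Lemma max_dense (Hcr : completely_regular mul)
  (Baire : forall U, gopen U -> U !=set0 -> ~ ((U `&` nonperiodic mul s s') !=set0) ->
     exists n : nat, (0 < n)%N /\ exists V, gopen V /\ V !=set0 /\
       forall mu, V mu -> sz (Posz n) mu = mu) :
  maximal_abelian mulB scB Psi P -> gdense (nonperiodic mul s s').
Proof.
move=> [_ _ hmax] U hU hne; apply: contrapT => hno.
have [n [n0 [V [hV [[mu0 Vmu0] hper]]]]] := Baire U hU hne hno.
have hcl : gclosed (~` V) by rewrite /gclosed setCK.
have [a [ha0 ha]] := Hcr (~` V) mu0 hcl (fun h => h Vmu0).
have [b [Pb eb]] := gelP a.
pose x : int -> B := fun m => if m == Posz n then b else 0.
have xS : Sc x.
  split.
    split; last by move=> m; rewrite /x; case: ifP.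
    apply: (fin_sub (finite_set1 (Posz n))) => m /=; rewrite /x.
    by case: eqP.
  move=> m mu; rewrite /x; have [->|mn] := eqVneq m (Posz n); last by rewrite e0 eqxx.
  rewrite eb => hmu; apply: hper; apply: contrapT => nV.
  by move: hmu; rewrite ha0 ?eqxx.
have := hmax Sc Sc_sub Sc_ab base_Sc.
move=> hSc; have : cp_base P x by rewrite -hSc.
move=> [_ /(_ (Posz n))]; rewrite /x eqxx => hb.
apply: ha; rewrite -eb hb //.
by rewrite -lt0n.
Qed.

End Generic.
Section Final.
Variable R : realType.
Local Notation C := R[i].
Variable A : lmodType C.
Variable mul : A -> A -> A.
Local Notation D := (Delta mul).

Variables s s' : A -> A.
Hypothesis Hs : algebra_automorphism mul s s'.

Lemma hat_inst (Baire : forall U, gopen U -> U !=set0 ->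
     ~ ((U `&` nonperiodic mul s s') !=set0) ->
     exists n : nat, (0 < n)%N /\ exists V, gopen V /\ V !=set0 /\
       forall mu, V mu -> sigmaz mul s s' (Posz n) mu = mu)
  (Hcr : completely_regular mul) :
  gdense (nonperiodic mul s s') <->
   maximal_abelian
     (fun f g : Delta mul -> R[i] => fun mu => f mu * g mu)
     (fun (c : R[i]) (f : Delta mul -> R[i]) => fun mu => c * f mu)
     (hat_sigmaz mul s s')
     (range (gelfand mul)).
Proof.
have hPsi : forall n a, hat_sigmaz mul s s' n (gelfand mul a) = gelfand mul (autz s s' n a).
  by move=> n a; apply: funext => mu; rewrite /hat_sigmaz /gelfand /= (sigmaz_val Hs) opprK.
split.
  apply: (@dense_max R A mul s s' Hs _ _ _ _ _ (fun (f : D -> C) (mu : D) => f mu)) => //.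
  - by move=> a b h; exact: (funext h).
  - by exists 0 => //; exact: (funext (fun mu => ch0 mu)).
  - by move=> _ _ [a _ <-] [b _ <-]; exists (a + b) => //; exact: (funext (fun mu => chD mu a b)).
  - by move=> c _ [a _ <-]; exists (c *: a) => //; exact: (funext (fun mu => chZ mu c a)).
  - by move=> _ _ [a _ <-] [b _ <-]; exists (mul a b) => //; exact: (funext (fun mu => chM mu a b)).
  - by move=> n _ [a _ <-]; exists (autz s s' n a) => //; rewrite hPsi.
  - by move=> _ [a _ <-]; exists a.
  - by move=> a; exists (gelfand mul a); split => //; exists a.
apply: (@max_dense R A mul s s' Hs _ _ _ _ _ (fun (f : D -> C) (mu : D) => f mu)) => //.
- by move=> a b h; exact: (funext h).
- by exists 0 => //; exact: (funext (fun mu => ch0 mu)).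
- by move=> _ _ [a _ <-] [b _ <-]; exists (a + b) => //; exact: (funext (fun mu => chD mu a b)).
- by move=> c _ [a _ <-]; exists (c *: a) => //; exact: (funext (fun mu => chZ mu c a)).
- by move=> _ _ [a _ <-] [b _ <-]; exists (mul a b) => //; exact: (funext (fun mu => chM mu a b)).
- by move=> n _ [a _ <-]; exists (autz s s' n a) => //; rewrite hPsi.
- by move=> a; exists (gelfand mul a); split => //; exists a.
Qed.

Lemma A_inst (Baire : forall U, gopen U -> U !=set0 ->
     ~ ((U `&` nonperiodic mul s s') !=set0) ->
     exists n : nat, (0 < n)%N /\ exists V, gopen V /\ V !=set0 /\
       forall mu, V mu -> sigmaz mul s s' (Posz n) mu = mu)
  (Hcr : completely_regular mul) (Hss : semisimple mul) :
  maximal_abelian mul (fun (c : R[i]) (a : A) => c *: a) (autz s s') setT <->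
   gdense (nonperiodic mul s s').
Proof.
have ePsi : forall n a mu, sval mu (autz s s' n a) = sval (sigmaz mul s s' (- n) mu) a.
  by move=> n a mu; rewrite (sigmaz_val Hs) opprK.
have einj : forall a b, (forall mu : D, sval mu a = sval mu b) -> a = b.
  by move=> a b h; apply: Hss; apply: funext => mu; exact: h.
split.
  apply: (@max_dense R A mul s s' Hs _ _ _ _ _ (fun a mu => sval mu a)) => //.
  - exact: ch0.
  - by move=> ? ? ?; apply: chD.
  - by move=> ? ? ?; apply: chM.
  - by move=> ? ? ?; apply: chZ.
  - by move=> a; exists a.
apply: (@dense_max R A mul s s' Hs _ _ _ _ _ (fun a mu => sval mu a)) => //.
- exact: ch0.
- by move=> ? ? ?; apply: chD.
- by move=> ? ? ?; apply: chM.
- by move=> ? ? ?; apply: chZ.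
- by move=> b _; exists b.
- by move=> a; exists a.
Qed.
End Final.
Theorem theorem4p8 (R : realType) (A : lmodType R[i])
  (mul : A -> A -> A) (nrm : A -> R)
  (HA : comm_banach_algebra mul nrm)
  (Hss : semisimple mul) (Hcr : completely_regular mul)
  (s s' : A -> A) (Hs : algebra_automorphism mul s s') :
  (gdense (nonperiodic mul s s') <->
   maximal_abelian
     (fun f g : Delta mul -> R[i] => fun mu => f mu * g mu)
     (fun (c : R[i]) (f : Delta mul -> R[i]) => fun mu => c * f mu)
     (hat_sigmaz mul s s')
     (range (gelfand mul)))
  /\
  (maximal_abelian mul (fun (c : R[i]) (a : A) => c *: a) (autz s s') setT <->
   gdense (nonperiodic mul s s')).
Proof.
have Bai := baire HA Hs.
split; [exact: hat_inst | exact: A_inst].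
Qed.
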